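(* Let $p\in[1,\infty]$ and $d\in\mathbb N$. For $n\in\mathbb N$ let $s_n\in\mathbb N$ and let $\mathbf w^{(n)}=(\mathbf w^{(n)}_0,\dots,\mathbf w^{(n)}_{s_n})\in\mathbb R^{s_n+1}$ be filter masks, let $m_0:=d$, $m_n:=m_{n-1}+s_n$, and let $\mathbf b_n\in\mathbb R^{m_n}$ be bias vectors. Suppose $\sum_{n=1}^\infty\|\mathbf b_n\|_p<\infty$, $\mathbf w^{(n)}_0=1$ for all $n\in\mathbb N$, and $\sum_{n=1}^\infty\sum_{j=1}^{s_n}|\mathbf w^{(n)}_j|<\infty$. Then the deep ReLU convolutional neural networks $x^{(n)}$ converge pointwise on $[0,1]^d$, i.e. for each $x\in[0,1]^d$ the sequence $\tilde x^{(n)}$ converges in $\ell^p$.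
   Context: $\sigma(t)=\max(t,0)$ applied componentwise. For $\mathbf x\in\mathbb R^m$ and $\mathbf w=(\mathbf w_0,\dots,\mathbf w_s)$, the convolution $\mathbf x*\mathbf w\in\mathbb R^{m+s}$ has entries $(\mathbf x*\mathbf w)_i=\sum_{j=\max(0,i-m)}^{\min(i-1,s)}\mathbf w_j\mathbf x_{i-j}$, $1\le i\le m+s$; equivalently $\mathbf x*\mathbf w=\mathbf W\mathbf x$ with $\mathbf W\in\mathbb R^{(m+s)\times m}$, $\mathbf W_{jk}=\mathbf w_{j-k}$ if $0\le j-k\le s$ and $0$ otherwise. The CNN is defined by $x^{(0)}:=x\in[0,1]^d$ and $x^{(n)}:=\sigma(x^{(n-1)}*\mathbf w^{(n)}+\mathbf b_n)\in\mathbb R^{m_n}$; $\tilde x^{(n)}\in\ell^p$ denotes $x^{(n)}$ extended by zeros beyond its first $m_n$ entries. *)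

(* Defs.v *)
From HB Require Import structures.
From mathcomp Require Import all_boot all_order all_algebra.
From mathcomp Require Import all_classical all_reals all_analysis.
Set Implicit Arguments. Unset Strict Implicit. Unset Printing Implicit Defensive.
Import Order.TTheory GRing.Theory Num.Theory.
Local Open Scope ring_scope.

(* Conventions: real vectors of R^m are functions 'I_m -> R (0-based indices:
   paper's index i in 1..m is our index i-1).  Sequences in l^p are nat -> R. *)

Section CNN.
Variable R : realType.

Definition relu (t : R) : R := Num.max t 0.

Definition zext (m : nat) (v : 'I_m -> R) : nat -> R :=
  fun i => match ltnP i m with
           | LtnNotGeq h => v (Ordinal h)
           | _ => 0
           end.

Definition lpnorm (p : \bar R) (y : nat -> R) : \bar R :=
  match p with
  | +oo%E => ereal_sup (range (fun i => (`|y i|)%:E))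
  | r%:E => poweR (\sum_(i <oo) ((`|y i| `^ r)%:E))%E r^-1
  | -oo%E => 0%E
  end.

Fixpoint width (d : nat) (s : nat -> nat) (n : nat) : nat :=
  if n is n'.+1 then (width d s n' + s n)%N else d.

(* convolution x * w in R^(m+s) of x in R^m (given by its zero extension
   x : nat -> R) with the mask w = (w_0,...,w_s), returned zero-extended:
   (x*w)_i = sum_{j = max(0, i-(m-1))}^{min(i, s)} w_j x_{i-j}, 0 <= i < m+s *)
Definition conv (m s : nat) (w : 'I_s.+1 -> R) (x : nat -> R) : nat -> R :=
  fun i => if (i < m + s)%N then
             \sum_(j < s.+1 | (j <= i)%N && (i - j < m)%N) w j * x (i - j)%N
           else 0.

(* the CNN layers, zero-extended: cnn n = \tilde x^{(n)} *)
Fixpoint cnn (d : nat) (s : nat -> nat) (w : forall n, 'I_(s n).+1 -> R)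
    (b : forall n, 'I_(width d s n) -> R) (x : 'I_d -> R) (n : nat) : nat -> R :=
  match n with
  | 0 => zext x
  | n'.+1 => fun i =>
      if (i < width d s n'.+1)%N then
        relu (conv (width d s n') (w n'.+1) (cnn w b x n') i + zext (b n'.+1) i)
      else 0
  end.

End CNN.

(* Main.v *)
From Pilot Require Import Defs.
From HB Require Import structures.
From mathcomp Require Import all_boot all_order all_algebra.
From mathcomp Require Import all_classical all_reals all_analysis.
From mathcomp Require Import lra ring zify.
Import Order.TTheory GRing.Theory Num.Theory.
Import numFieldNormedType.Exports.
Local Open Scope classical_set_scope.
Local Open Scope ring_scope.

Section L.
Variable R : realType.
Local Open Scope ereal_scope.
Implicit Types (f g : nat -> R).

Definition shiftf (j : nat) (f : nat -> R) : nat -> R :=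
  fun i => if (j <= i)%N then f (i - j)%N else 0%R.
Definition truncf (k : nat) (f : nat -> R) : nat -> R :=
  fun i => if (i < k)%N then f i else 0%R.

Lemma lpE (r : R) (f : nat -> R) : (0 < r)%R ->
  lpnorm r%:E f = Lnorm (@counting nat R) r%:E (EFin \o f).
Proof. by move=> r0; rewrite Lnorm_counting. Qed.

Section fin.
Variable r : R.
Hypothesis r1 : (1 <= r)%R.
Let r0 : (0 < r)%R. Proof. exact: lt_le_trans r1. Qed.
Let rn0 : (r != 0)%R. Proof. by rewrite gt_eqF. Qed.

Let ser_ge0 f : 0 <= \sum_(i <oo) (`|f i| `^ r)%:E.
Proof. by apply: nneseries_ge0 => i _ _; rewrite lee_fin powR_ge0. Qed.

Lemma lpr_mono f g : (forall i, `|f i| <= `|g i|)%R ->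
  lpnorm r%:E f <= lpnorm r%:E g.
Proof.
move=> fg /=; apply: gt0_ler_poweR.
- by rewrite invr_ge0 ltW.
- by rewrite in_itv /= ser_ge0 leey.
- by rewrite in_itv /= ser_ge0 leey.
apply: lee_nneseries => [i _ _|i _]; first by rewrite lee_fin powR_ge0.
by rewrite lee_fin; apply: (ge0_ler_powR (ltW r0)); rewrite ?nnegrE.
Qed.

Let powK (x : R) : (0 <= x)%R -> ((x `^ r) `^ r^-1)%R = x.
Proof. by move=> x0; rewrite -powRrM mulfV // powRr1. Qed.

Let epowK (x : \bar R) : 0 <= x -> (x `^ r^-1) `^ r = x.
Proof. by move=> x0; rewrite -poweRrM mulVf // poweRe1. Qed.

Lemma lpr_pt f i : (`|f i|)%:E <= lpnorm r%:E f.
Proof.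
rewrite /= -[X in X%:E <= _](powK _ (normr_ge0 (f i))) -poweR_EFin.
apply: gt0_ler_poweR.
- by rewrite invr_ge0 ltW.
- by rewrite in_itv /= lee_fin powR_ge0 leey.
- by rewrite in_itv /= ser_ge0 leey.
rewrite (@nneseriesD1 _ (fun k => (`|f k| `^ r)%:E) i xpredT); last 2 first.
- by move=> k _; rewrite lee_fin powR_ge0.
- by [].
apply: leeDl; apply: nneseries_ge0 => k _ _; by rewrite lee_fin powR_ge0.
Qed.

Lemma lpr_truncE f k : \sum_(i <oo) (`|truncf k f i| `^ r)%:E =
  \sum_(0 <= i < k) (`|f i| `^ r)%:E.
Proof.
rewrite (nneseries_split 0 k); last by move=> i _; rewrite lee_fin powR_ge0.
rewrite add0n eseries0 ?adde0; last first.
  by move=> i ki _; rewrite /truncf ltnNge ki /= normr0 powR0.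
apply: eq_big_nat => i /andP[_ ik]; by rewrite /truncf ik.
Qed.

Lemma lpr_fatou f (C : R) : (forall k, lpnorm r%:E (truncf k f) <= C%:E) ->
  lpnorm r%:E f <= C%:E.
Proof.
move=> H.
have C0 : (0 <= C)%R.
  by rewrite -lee_fin (le_trans _ (H 0%N)) //= poweR_ge0.
apply: (@le_trans _ _ (((C `^ r)%R%:E) `^ r^-1)); last by rewrite poweR_EFin powK.
apply: gt0_ler_poweR.
- by rewrite invr_ge0 ltW.
- by rewrite in_itv /= ser_ge0 leey.
- by rewrite in_itv /= lee_fin powR_ge0 leey.
apply: lime_le; first by apply: is_cvg_nneseries => i _; rewrite lee_fin powR_ge0.
apply: nearW => k.
have := H k; rewrite /= lpr_truncE => Hk.
rewrite -(epowK (\sum_(0 <= i < k) _)); last first.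
  by apply: sume_ge0 => i _; rewrite lee_fin powR_ge0.
rewrite -poweR_EFin; apply: gt0_ler_poweR => //.
- by rewrite ltW.
- by rewrite in_itv /= poweR_ge0 leey.
- by rewrite in_itv /= lee_fin C0 leey.
Qed.

Lemma lpr_fin f k : (forall i, (k <= i)%N -> f i = 0%R) -> lpnorm r%:E f < +oo.
Proof.
move=> fk.
have -> : f = truncf k f.
  by apply/funext => i; rewrite /truncf; case: ltnP => // /fk.
rewrite /= lpr_truncE; apply: poweR_lty.
by rewrite sumEFin ltry.
Qed.

Lemma lpr_scale c f : lpnorm r%:E (fun i => c * f i)%R = (`|c|)%:E * lpnorm r%:E f.
Proof.
rewrite /=.
under eq_eseriesr => i _ do rewrite normrM powRM // EFinM.
rewrite nneseriesZl; last by move=> i _; rewrite lee_fin powR_ge0.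
rewrite poweRM ?lee_fin ?powR_ge0 ?ser_ge0 //.
by rewrite poweR_EFin powK.
Qed.

Lemma lpr_shift j f : lpnorm r%:E (shiftf j f) = lpnorm r%:E f.
Proof.
rewrite /=; congr poweR.
rewrite (nneseries_split 0 j); last by move=> i _; rewrite lee_fin powR_ge0.
rewrite add0n big1_seq ?add0e; last first.
  move=> i /andP[_]; rewrite mem_index_iota => /andP[_ ij].
  by rewrite /shiftf leqNgt ij /= normr0 powR0.
rewrite -nneseries_addn; last by move=> i; rewrite lee_fin powR_ge0.
apply: eq_eseriesr => i _.
by rewrite /shiftf leq_addl addnK.
Qed.

Lemma lpr_add f g : lpnorm r%:E (f \+ g)%R <= lpnorm r%:E f + lpnorm r%:E g.
Proof.
rewrite !lpE //.
by apply: eminkowski => //; rewrite lee_fin.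
Qed.

End fin.

Section inf.
Let N f := lpnorm (R:=R) +oo f.
Lemma lpi_pt f i : (`|f i|)%:E <= lpnorm +oo f.
Proof. by apply: ereal_sup_ubound; exists i. Qed.

Lemma lpi_ge0 f : 0 <= lpnorm +oo f.
Proof. exact: le_trans (lpi_pt f 0). Qed.

Lemma lpi_mono f g : (forall i, `|f i| <= `|g i|)%R ->
  lpnorm +oo f <= lpnorm +oo g.
Proof.
move=> fg; apply: ge_ereal_sup => _ [i _ <-].
by apply: le_trans (lpi_pt g i); rewrite lee_fin.
Qed.

Lemma lpi_add f g : lpnorm +oo (f \+ g)%R <= lpnorm +oo f + lpnorm +oo g.
Proof.
apply: ge_ereal_sup => _ [i _ <-].
apply: le_trans (leeD (lpi_pt f i) (lpi_pt g i)).
by rewrite -EFinD lee_fin ler_normD.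
Qed.

Lemma lpi_scale c f : lpnorm +oo (fun i => c * f i)%R <= (`|c|)%:E * lpnorm +oo f.
Proof.
apply: ge_ereal_sup => _ [i _ <-].
by rewrite normrM EFinM; apply: lee_wpmul2l; rewrite ?lee_fin // lpi_pt.
Qed.

Lemma lpi_shift j f : lpnorm +oo (shiftf j f) <= lpnorm +oo f.
Proof.
apply: ge_ereal_sup => _ [i _ <-]; rewrite /shiftf.
by case: ifP => _; [exact: lpi_pt | rewrite normr0 lpi_ge0].
Qed.

Lemma lpi_fatou f (C : R) : (forall k, lpnorm +oo (truncf k f) <= C%:E) ->
  lpnorm +oo f <= C%:E.
Proof.
move=> H; apply: ge_ereal_sup => _ [i _ <-].
apply: le_trans (H i.+1).
by apply: le_trans (lpi_pt _ i); rewrite /truncf ltnSn.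
Qed.

Lemma lpi_fin f k : (forall i, (k <= i)%N -> f i = 0%R) -> lpnorm +oo f < +oo.
Proof.
move=> fk; apply: (@le_lt_trans _ _ (\sum_(0 <= i < k) `|f i|)%R%:E); last exact: ltry.
apply: ge_ereal_sup => _ [i _ <-]; rewrite lee_fin.
case: (ltnP i k) => ik; last by rewrite fk // normr0 sumr_ge0.
rewrite (bigD1_seq i) ?mem_index_iota ?iota_uniq //=.
by rewrite lerDl sumr_ge0.
Qed.
End inf.

Section gen.
Variable p : \bar R.
Hypothesis p1 : 1 <= p.

Let cases : (exists2 r : R, (1 <= r)%R & p = r%:E) \/ p = +oo.
Proof.
move: p1; case: p => [r|_|//]; last by right.
by rewrite lee_fin => r1; left; exists r.
Qed.

Lemma lp_pt f i : (`|f i|)%:E <= lpnorm p f.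
Proof. by case: cases => [[r r1 ->]|->]; [exact: lpr_pt|exact: lpi_pt]. Qed.

Lemma lp_ge0 f : 0 <= lpnorm p f.
Proof. exact: le_trans (lp_pt f 0). Qed.

Lemma lp_mono f g : (forall i, `|f i| <= `|g i|)%R -> lpnorm p f <= lpnorm p g.
Proof. by case: cases => [[r r1 ->]|->]; [exact: lpr_mono|exact: lpi_mono]. Qed.

Lemma lp_add f g : lpnorm p (f \+ g)%R <= lpnorm p f + lpnorm p g.
Proof. by case: cases => [[r r1 ->]|->]; [exact: lpr_add|exact: lpi_add]. Qed.

Lemma lp_scale c f : lpnorm p (fun i => c * f i)%R <= (`|c|)%:E * lpnorm p f.
Proof.
case: cases => [[r r1 ->]|->]; last exact: lpi_scale.
by rewrite lpr_scale.
Qed.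

Lemma lp_shift j f : lpnorm p (shiftf j f) <= lpnorm p f.
Proof.
case: cases => [[r r1 ->]|->]; last exact: lpi_shift.
by rewrite lpr_shift.
Qed.

Lemma lp_fatou f (C : R) : (forall k, lpnorm p (truncf k f) <= C%:E) ->
  lpnorm p f <= C%:E.
Proof. by case: cases => [[r r1 ->]|->]; [exact: lpr_fatou|exact: lpi_fatou]. Qed.

Lemma lp_fin f k : (forall i, (k <= i)%N -> f i = 0%R) -> lpnorm p f < +oo.
Proof. by case: cases => [[r r1 ->]|->]; [exact: lpr_fin|exact: lpi_fin]. Qed.

Lemma lp_finE f k : (forall i, (k <= i)%N -> f i = 0%R) ->
  lpnorm p f = (fine (lpnorm p f))%:E.
Proof.
move=> fk; rewrite fineK // ge0_fin_numE ?lp_ge0 //; exact: lp_fin fk.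
Qed.

Lemma lp_zero : lpnorm p (fun _ => 0%R) = 0.
Proof.
apply/eqP; rewrite eq_le lp_ge0 andbT.
have := lp_scale 0 (fun _ => 0%R).
by rewrite normr0 mul0e; under eq_fun do rewrite mul0r.
Qed.

Lemma lp_sym f g : lpnorm p (f \- g)%R = lpnorm p (g \- f)%R.
Proof. by apply/eqP; rewrite eq_le !lp_mono // => i; rewrite distrC. Qed.

Lemma lp_sum (I : Type) (r : seq I) (F : I -> nat -> R) :
  lpnorm p (fun i => \sum_(j <- r) F j i)%R <= \sum_(j <- r) lpnorm p (F j).
Proof.
elim: r => [|a r IH].
  by rewrite big_nil; under eq_fun do rewrite big_nil; rewrite lp_zero.
rewrite big_cons.
under eq_fun do rewrite big_cons.
apply: le_trans (lp_add (F a) (fun i => \sum_(j <- r) F j i)%R) _.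
exact: leeD.
Qed.

End gen.
Arguments lp_pt {p}.
Arguments lp_ge0 {p}.
Arguments lp_mono {p}.
Arguments lp_add {p}.
Arguments lp_scale {p}.
Arguments lp_shift {p}.
Arguments lp_fatou {p}.
Arguments lp_fin {p}.
Arguments lp_finE {p}.
Arguments lp_zero {p}.
Arguments lp_sym {p}.
Arguments lp_sum {p}.

Lemma zext_ge m (v : 'I_m -> R) i : (m <= i)%N -> zext v i = 0%R.
Proof. by rewrite /zext; case: ltnP => // h; rewrite leqNgt h. Qed.

Lemma relu_ge0 (t : R) : (0 <= relu t)%R.
Proof. by rewrite /relu le_max lexx orbT. Qed.

Lemma relu0 : relu (0 : R) = 0%R.
Proof. by rewrite /relu maxxx. Qed.

Lemma relu_dist (u v : R) : (0 <= v)%R -> (`|relu u - v| <= `|u - v|)%R.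
Proof.
move=> v0; rewrite /relu; case: (leP 0%R u) => u0.
  by [].
rewrite sub0r normrN ger0_norm // ler0_norm; last by rewrite subr_le0 (le_trans (ltW u0)).
rewrite opprB; lra.
Qed.

Lemma conv_shift m s0 (w0 : 'I_s0.+1 -> R) f : (forall i, (m <= i)%N -> f i = 0%R) ->
  Pilot.Defs.conv m w0 f = (fun i => \sum_(j < s0.+1) w0 j * shiftf j f i)%R.
Proof.
move=> fm; apply/funext => i; rewrite /Pilot.Defs.conv.
case: ifPn => ims.
  rewrite big_mkcond /=; apply: eq_bigr => j _.
  rewrite /shiftf; case: (leqP j i) => ji /=.
    by case: ltnP => // h; rewrite fm ?mulr0.
  by rewrite mulr0.
rewrite big1 // => j _; rewrite /shiftf; case: leqP => ji; last by rewrite mulr0.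
rewrite fm ?mulr0 //.
rewrite -ltnNge in ims.
have := ltn_ord j; lia.
Qed.

Lemma conv_sub m s0 (w0 : 'I_s0.+1 -> R) f : (forall i, (m <= i)%N -> f i = 0%R) ->
  w0 ord0 = 1%R ->
  (Pilot.Defs.conv m w0 f \- f)%R = (fun i => \sum_(j < s0) w0 (lift ord0 j) * shiftf j.+1 f i)%R.
Proof.
move=> fm w01; rewrite conv_shift //; apply/funext => i /=.
rewrite big_ord_recl w01 mul1r /shiftf /= subn0 addrC addKr.
by [].
Qed.

Lemma alpha_eq s0 (w0 : 'I_s0.+1 -> R) :
  (\sum_(j < s0.+1 | (0 < j)%N) `|w0 j| = \sum_(j < s0) `|w0 (lift ord0 j)|)%R.
Proof. by rewrite big_mkcond big_ord_recl /= add0r. Qed.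


Lemma dist_ev (u : nat -> R) l eps : u @ \oo --> l -> (0 < eps)%R ->
  \forall m \near \oo, (`|l - u m| < eps)%R.
Proof. move=> h e0; exact: cvgr_dist_lt. Qed.

Lemma near_all_lt (P : nat -> nat -> Prop) k :
  (forall i, \forall m \near \oo, P i m) ->
  \forall m \near \oo, forall i, (i < k)%N -> P i m.
Proof.
move=> H; elim: k => [|k IH]; first exact: nearW.
apply: filterS2 IH (H k) => m h1 h2 i; rewrite ltnS leq_eqVlt.
by case/orP => [/eqP -> //|/h1].
Qed.

Section cnn.
Variables (p : \bar R) (d : nat) (s : nat -> nat)
  (w : forall n, 'I_(s n).+1 -> R) (b : forall n, 'I_(width d s n) -> R)
  (x : 'I_d -> R).
Hypothesis p1 : 1 <= p.
Hypothesis hx : forall i, (0 <= x i <= 1)%R.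
Hypothesis hw : forall n, (1 <= n)%N -> w n ord0 = 1%R.

Local Notation X := (cnn w b x).
Local Notation N := (lpnorm p).
Definition alpha n := (\sum_(j < (s n).+1 | (0 < j)%N) `|w n j|)%R.

Lemma cnn_ge n i : (width d s n <= i)%N -> X n i = 0%R.
Proof.
case: n => [|n] h; first exact: zext_ge.
by rewrite /= ifN // -leqNgt.
Qed.

Lemma cnn_ge0 n i : (0 <= X n i)%R.
Proof.
case: n => [|n] /=.
  by rewrite /zext; case: ltnP => // h; case/andP: (hx (Ordinal h)).
by case: ifP => // _; exact: relu_ge0.
Qed.

Lemma cnnS n : X n.+1 =
  (fun i => relu (Pilot.Defs.conv (width d s n) (w n.+1) (X n) i + zext (b n.+1) i))%R.
Proof.
apply/funext => i /=; case: ifPn => // h.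
rewrite zext_ge; last by rewrite leqNgt.
by rewrite /Pilot.Defs.conv ifN // addr0 relu0.
Qed.

Lemma alpha_ge0 n : (0 <= alpha n)%R.
Proof. by apply: sumr_ge0 => j _. Qed.

Lemma key n : N (X n.+1 \- X n)%R <=
  (alpha n.+1)%:E * N (X n) + N (zext (b n.+1)).
Proof.
set C := Pilot.Defs.conv (width d s n) (w n.+1) (X n).
apply: (@le_trans _ _ (N ((C \- X n) \+ zext (b n.+1))%R)).
  apply: (lp_mono p1) => i; rewrite cnnS /=.
  have -> : (C i - X n i + zext (b n.+1) i = (C i + zext (b n.+1) i) - X n i)%R.
    by rewrite addrAC.
  exact/relu_dist/cnn_ge0.
apply: le_trans (lp_add p1 _ _) _; apply: leeD => //.
rewrite /C conv_sub; last 2 first.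
- exact: cnn_ge.
- exact: hw.
apply: le_trans (lp_sum p1 _ _ (fun j i => w n.+1 (lift ord0 j) * shiftf j.+1 (X n) i)%R) _.
rewrite /alpha alpha_eq -sumEFin ge0_sume_distrl; last by move=> j _; rewrite lee_fin.
apply: lee_sum => j _.
apply: le_trans (lp_scale p1 _ _) _.
by apply: lee_wpmul2l; [rewrite lee_fin|exact: (lp_shift p1)].
Qed.


Hypothesis Hb : \sum_(1 <= n <oo) N (zext (b n)) < +oo.
Hypothesis Ha : \sum_(1 <= n <oo) (alpha n)%:E < +oo.

Definition beta n := fine (N (zext (b n))).
Lemma betaE n : N (zext (b n)) = (beta n)%:E.
Proof. by apply: (lp_finE p1 _ (width d s n)) => i; exact: zext_ge. Qed.
Lemma beta_ge0 n : (0 <= beta n)%R.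
Proof. by rewrite -lee_fin -betaE lp_ge0. Qed.

Definition E n := fine (N (X n)).
Lemma EE n : N (X n) = (E n)%:E.
Proof. by apply: (lp_finE p1 _ (width d s n)) => i; exact: cnn_ge. Qed.
Lemma E_ge0 n : (0 <= E n)%R.
Proof. by rewrite -lee_fin -EE lp_ge0. Qed.

Lemma ex_bound (u : nat -> R) : (forall n, 0 <= u n)%R ->
  \sum_(1 <= n <oo) (u n)%:E < +oo ->
  exists B, forall k, (\sum_(1 <= n < k) u n <= B)%R.
Proof.
move=> u0 ul.
have sfin : \sum_(1 <= n <oo) (u n)%:E \is a fin_num.
  by rewrite ge0_fin_numE // nneseries_ge0 // => n _ _; rewrite lee_fin.
exists (fine (\sum_(1 <= n <oo) (u n)%:E)) => k.
rewrite -lee_fin fineK // -sumEFin.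
by apply: nneseries_lim_ge => n _ _; rewrite lee_fin.
Qed.

Definition Ap n := (\sum_(1 <= k < n.+1) alpha k)%R.
Definition Bp n := (\sum_(1 <= k < n.+1) beta k)%R.

Lemma Estep n : (E n.+1 <= (1 + alpha n.+1) * E n + beta n.+1)%R.
Proof.
rewrite -lee_fin -EE.
have -> : X n.+1 = (X n \+ (X n.+1 \- X n))%R.
  by apply/funext => i /=; rewrite addrCA subrr addr0.
apply: le_trans (lp_add p1 _ _) _.
apply: le_trans (leeD (lexx _) (key n)) _.
by rewrite EE betaE -EFinM -!EFinD lee_fin mulrDl mul1r addrA.
Qed.

Lemma Ebound n : (E n <= (E 0 + Bp n) * expR (Ap n))%R.
Proof.
elim: n => [|n IH].
  by rewrite /Bp /Ap !big_geq // addr0 expR0 mulr1.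
have hA : Ap n.+1 = (Ap n + alpha n.+1)%R by rewrite /Ap big_nat_recr.
have hB : Bp n.+1 = (Bp n + beta n.+1)%R by rewrite /Bp big_nat_recr.
rewrite hA hB expRD addrA.
have a0 := alpha_ge0 n.+1; have b0 := beta_ge0 n.+1; have e0 := E_ge0 n.
have P0 : (0 <= E 0 + Bp n)%R.
  by rewrite addr_ge0 ?E_ge0 // sumr_ge0 // => k _; exact: beta_ge0.
have X1 : (1 <= expR (Ap n))%R.
  by rewrite -expR0 ler_expR sumr_ge0 // => k _; exact: alpha_ge0.
have Y1 : (1 + alpha n.+1 <= expR (alpha n.+1))%R by exact: expR_ge1Dx.
set P := (E 0 + Bp n)%R in P0 IH *; set Xe := expR (Ap n) in X1 IH *.
set Ye := expR (alpha n.+1) in Y1 *.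
apply: le_trans (Estep n) _.
have h1 : ((1 + alpha n.+1) * E n <= (1 + alpha n.+1) * (P * Xe))%R.
  by apply: ler_wpM2l => //; rewrite addr_ge0.
have h2 : ((1 + alpha n.+1) * (P * Xe) <= Ye * (P * Xe))%R.
  by apply: ler_wpM2r => //; rewrite mulr_ge0 // (le_trans _ X1).
have h3 : (beta n.+1 <= beta n.+1 * (Xe * Ye))%R.
  rewrite -[X in (X <= _)%R]mulr1; apply: ler_wpM2l => //.
  by rewrite -[1%R]mulr1 ler_pM // (le_trans _ Y1) // lerDl.
have -> : ((P + beta n.+1) * (Xe * Ye) = Ye * (P * Xe) + beta n.+1 * (Xe * Ye))%R.
  by ring.
by apply: lerD => //; apply: le_trans h1 h2.
Qed.


Section bounds.
Variables (A B : R).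
Hypothesis hAb : forall k, (\sum_(1 <= n < k) alpha n <= A)%R.
Hypothesis hBb : forall k, (\sum_(1 <= n < k) beta n <= B)%R.

Definition M := ((E 0 + B) * expR A)%R.

Lemma E_le_M n : (E n <= M)%R.
Proof.
apply: le_trans (Ebound n) _.
apply: ler_pM.
- by rewrite addr_ge0 ?E_ge0 // sumr_ge0 // => k _; exact: beta_ge0.
- exact: expR_ge0.
- by rewrite lerD2l hBb.
- by rewrite ler_expR hAb.
Qed.

Lemma M_ge0 : (0 <= M)%R.
Proof. exact: le_trans (E_ge0 0) (E_le_M 0). Qed.

Definition c n := (alpha n.+1 * M + beta n.+1)%R.
Definition S n := (M * Ap n + Bp n)%R.

Lemma c_ge0 n : (0 <= c n)%R.
Proof. by rewrite addr_ge0 ?beta_ge0 // mulr_ge0 ?alpha_ge0 ?M_ge0. Qed.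

Lemma S0 : S 0 = 0%R.
Proof. by rewrite /S /Ap /Bp !big_geq // mulr0 addr0. Qed.

Lemma SS n : S n.+1 = (S n + c n)%R.
Proof.
have hA : Ap n.+1 = (Ap n + alpha n.+1)%R by rewrite /Ap big_nat_recr.
have hB : Bp n.+1 = (Bp n + beta n.+1)%R by rewrite /Bp big_nat_recr.
rewrite /S /c hA hB; ring.
Qed.

Lemma S_ub n : (S n <= M * A + B)%R.
Proof. by rewrite lerD ?hBb // ler_wpM2l ?M_ge0 ?hAb. Qed.

Lemma S_nd : {homo S : n m / (n <= m)%N >-> (n <= m)%R}.
Proof.
move=> n m nm; rewrite -(subnKC nm); elim: (m - n)%N => [|k IH].
  by rewrite addn0.
by rewrite addnS SS (le_trans IH) // lerDl c_ge0.
Qed.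

Lemma Dn n : N (X n.+1 \- X n)%R <= (c n)%:E.
Proof.
apply: le_trans (key n) _.
rewrite EE betaE -EFinM -EFinD lee_fin /c lerD2r.
by apply: ler_wpM2l; [exact: alpha_ge0|exact: E_le_M].
Qed.

Lemma Dmn n k : N (X (n + k) \- X n)%R <= (S (n + k) - S n)%:E.
Proof.
elim: k => [|k IH].
  rewrite addn0 subrr.
  have -> : (X n \- X n = fun _ => 0)%R by apply/funext => i /=; rewrite subrr.
  by rewrite lp_zero.
have -> : (X (n + k.+1) \- X n = (X (n + k).+1 \- X (n + k)) \+ (X (n + k) \- X n))%R.
  by apply/funext => i /=; rewrite addnS addrA subrK.
apply: le_trans (lp_add p1 _ _) _.
apply: le_trans (leeD (Dn _) IH) _.
by rewrite addnS SS -EFinD lee_fin; lra.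
Qed.

Lemma Dmn' n m : (n <= m)%N -> N (X m \- X n)%R <= (S m - S n)%:E.
Proof. by move=> nm; rewrite -(subnKC nm); exact: Dmn. Qed.


Lemma S_ubound : has_ubound (range S).
Proof. by exists (M * A + B)%R => _ [n _ <-]; exact: S_ub. Qed.

Definition L := limn S.
Lemma S_cvg : S @ \oo --> L.
Proof. exact: (nondecreasing_is_cvgn S_nd S_ubound). Qed.

Lemma S_le_L n : (S n <= L)%R.
Proof. exact: (nondecreasing_cvgn_le S_nd S_cvg n). Qed.

Lemma pt_diff n m i : (n <= m)%N -> (`|X m i - X n i| <= S m - S n)%R.
Proof.
move=> nm; rewrite -lee_fin.
exact: le_trans (lp_pt p1 (X m \- X n)%R i) (Dmn' n m nm).
Qed.

Definition v i m := (X m i + S m)%R.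

Lemma v_nd i : {homo v i : n m / (n <= m)%N >-> (n <= m)%R}.
Proof.
move=> n m nm; have h := pt_diff n m i nm.
have h2 : (X n i - X m i <= `|X m i - X n i|)%R.
  by rewrite distrC ler_norm.
rewrite /v; lra.
Qed.

Lemma v_ub i : has_ubound (range (v i)).
Proof.
exists (X 0 i + 2 * (M * A + B))%R => _ [m _ <-].
have h := pt_diff 0 m i (leq0n m); rewrite S0 in h.
have h2 : (X m i - X 0 i <= `|X m i - X 0 i|)%R by rewrite ler_norm.
have h3 := S_ub m.
rewrite /v; lra.
Qed.

Definition y i := (limn (v i) - L)%R.

Lemma X_cvg i : (fun m => X m i) @ \oo --> y i.
Proof.
have hv : v i @ \oo --> limn (v i) := nondecreasing_is_cvgn (v_nd i) (v_ub i).
have -> : (fun m => X m i) = (v i - S)%R by apply/funext => m /=; rewrite /v addrK.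
exact: (cvgB hv S_cvg).
Qed.


Lemma bound n : N (X n \- y)%R <= (L - S n)%:E.
Proof.
apply: (lp_fatou p1) => k.
set T1 := truncf k (fun _ => 1%R).
have KE : N T1 = (fine (N T1))%:E.
  by apply: (lp_finE p1 _ k) => i ik; rewrite /T1 /truncf ltnNge ik.
set K := fine (N T1) in KE.
have K0 : (0 <= K)%R by rewrite -lee_fin -KE lp_ge0.
apply/lee_addgt0Pr => e e0.
set eps := (e / (K + 1))%R.
have K1 : (0 < K + 1)%R by lra.
have eps0 : (0 < eps)%R by rewrite divr_gt0.
have Hi : forall i, \forall m \near \oo, (`|y i - X m i| < eps)%R.
  by move=> i; apply: dist_ev eps0; exact: X_cvg.
have Hn := near_all_lt (fun i m => `|y i - X m i| < eps)%R k Hi.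
case: Hn => N0 _ HN.
set m := maxn N0 n.
have hm : forall i, (i < k)%N -> (`|y i - X m i| < eps)%R.
  by apply: HN; rewrite /= leq_maxl.
have nm : (n <= m)%N by rewrite leq_maxr.
have -> : truncf k (X n \- y)%R = (truncf k (X n \- X m) \+ truncf k (X m \- y))%R.
  apply/funext => i; rewrite /truncf /=; case: ifP => _; last by rewrite addr0.
  by rewrite addrA subrK.
apply: le_trans (lp_add p1 _ _) _.
have h1 : N (truncf k (X n \- X m))%R <= (L - S n)%:E.
  apply: (@le_trans _ _ (N (X m \- X n)%R)).
    apply: (lp_mono p1) => i; rewrite /truncf /=.
    by case: ifP => _; [rewrite distrC | rewrite normr0].
  apply: le_trans (Dmn' n m nm) _.
  by rewrite lee_fin lerD2r S_le_L.
have h2 : N (truncf k (X m \- y))%R <= (eps * K)%:E.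
  apply: (@le_trans _ _ (N (fun i => eps * T1 i)%R)).
    apply: (lp_mono p1) => i; rewrite /T1 /truncf /=.
    case: ifP => ik; last by rewrite normr0.
    by rewrite mulr1 (ger0_norm (ltW eps0)) distrC ltW // hm.
  apply: le_trans (lp_scale p1 eps T1) _.
  by rewrite KE (ger0_norm (ltW eps0)) -EFinM.
have h3 : (eps * K <= e)%R.
  rewrite /eps mulrAC ler_pdivrMr //; nra.
apply: le_trans (leeD h1 h2) _.
by rewrite -EFinD lee_fin lerD2l.
Qed.


Lemma y_fin : N y < +oo.
Proof.
have -> : y = ((y \- X 0) \+ X 0)%R by apply/funext => i /=; rewrite subrK.
apply: le_lt_trans (lp_add p1 _ _) _.
rewrite (lp_sym p1 y (X 0)) EE.
apply: (@le_lt_trans _ _ ((L - S 0)%:E + (E 0)%:E)).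
  by apply: leeD => //; exact: bound.
by rewrite -EFinD ltry.
Qed.

Lemma conv0 : (fun n => N (X n \- y)%R) @ \oo --> 0.
Proof.
apply: (@squeeze_cvge _ _ _ _ (fun=> 0) _ (fun n => (L - S n)%:E)).
- apply: nearW => n; rewrite lp_ge0 /=; [exact: (bound n)|exact: p1].
- exact: cvg_cst.
have h : (fun n => (L - S n)%R) @ \oo --> (L - L)%R.
  exact: (cvgB (cvg_cst L) S_cvg).
rewrite subrr in h.
apply/fine_cvgP; split; first exact: nearW.
exact: h.
Qed.

End bounds.

Lemma main_cnn : exists y, N y < +oo /\ ((fun n => N (X n \- y)%R) @ \oo --> 0).
Proof.
have [A hA] := ex_bound alpha alpha_ge0 Ha.
have [B hB] : exists B, forall k, (\sum_(1 <= n < k) beta n <= B)%R.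
  apply: (ex_bound beta beta_ge0).
  by under eq_eseriesr do rewrite -betaE.
exists (y A B); split; [exact: y_fin | exact: conv0].
Qed.

End cnn.
End L.

Theorem theorem6p1 (R : realType) (p : \bar R) (d : nat) (s : nat -> nat)
    (w : forall n, 'I_(s n).+1 -> R) (b : forall n, 'I_(width d s n) -> R) :
  (1 <= p)%E ->
  (\sum_(1 <= n <oo) lpnorm p (zext (b n)) < +oo)%E ->
  (forall n, (1 <= n)%N -> w n ord0 = 1) ->
  (\sum_(1 <= n <oo) (\sum_(j < (s n).+1 | (0 < j)%N) `|w n j|)%:E < +oo)%E ->
  forall x : 'I_d -> R, (forall i, 0 <= x i <= 1) ->
    exists y : nat -> R, (lpnorm p y < +oo)%E /\
      ((fun n => lpnorm p (cnn w b x n \- y)) @ \oo --> 0%E).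
Proof.
move=> p1 Hb hw Ha x hx.
exact: (@main_cnn R p d s w b x p1 hx hw Hb Ha).
Qed.
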